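(* Let $T_1,T_2$ be two trees. Every minimum and minimal isometric-universal graph for $\{T_1,T_2\}$ is a tree.
   Context: Graphs are finite, simple and undirected. $\mathrm{dist}_G(u,v)$ denotes the number of edges of a shortest $u$–$v$ path in $G$ ($\infty$ if none exists). A subgraph $H$ of $G$ is an isometric subgraph if $\mathrm{dist}_H(u,v)=\mathrm{dist}_G(u,v)$ for all vertices $u,v$ of $H$. A graph $\mathcal U$ is an isometric-universal graph for a family $\mathcal F$ of graphs if every graph of $\mathcal F$ is isomorphic to an isometric subgraph of $\mathcal U$. It is minimum if it has the smallest possible number of vertices among all isometric-universal graphs for $\mathcal F$, and it is minimal if no proper subgraph of $\mathcal U$ is an isometric-universal graph for $\mathcal F$. *)

(* Defs.v *)
From mathcomp Require Import all_boot.
Set Implicit Arguments. Unset Strict Implicit. Unset Printing Implicit Defensive.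

Record graph := Graph { vert : finType; adj : rel vert }.
Arguments adj : clear implicits.

Definition simple (G : graph) : Prop :=
  symmetric (adj G) /\ irreflexive (adj G).

Definition walk (T : finType) (e : rel T) (u v : T) (n : nat) : Prop :=
  exists p : seq T, [&& path e u p, last u p == v & size p == n].

(* is_dist e u v d : the distance from u to v is d (None = infinity). *)
Definition is_dist (T : finType) (e : rel T) (u v : T) (d : option nat) : Prop :=
  match d with
  | Some n => walk e u v n /\ (forall m, walk e u v m -> n <= m)
  | None => forall m, ~ walk e u v m
  end.

Definition subgraph (G : graph) (S : {set vert G}) (E : rel (vert G)) : graph :=
  @Graph {x : vert G | x \in S}
    (fun x y => E (val x) (val y) && adj G (val x) (val y)).

Definition proper_sub (G : graph) (S : {set vert G}) (E : rel (vert G)) : Prop :=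
  S != setT \/ exists x y, adj G x y && ~~ E x y.

Definition isometric_sub (H G : graph) : Prop :=
  exists (S : {set vert G}) (E : rel (vert G)),
    simple (subgraph S E) /\
    (exists f : vert H -> vert (subgraph S E), bijective f /\
        forall x y, adj H x y = adj (subgraph S E) (f x) (f y)) /\
    (forall (x y : vert (subgraph S E)) (d : option nat),
        is_dist (adj (subgraph S E)) x y d <-> is_dist (adj G) (val x) (val y) d).

Definition iso_universal2 (T1 T2 U : graph) : Prop :=
  isometric_sub T1 U /\ isometric_sub T2 U.

Definition minimum_universal2 (T1 T2 U : graph) : Prop :=
  iso_universal2 T1 T2 U /\
  forall W : graph, simple W -> iso_universal2 T1 T2 W -> #|vert U| <= #|vert W|.

Definition minimal_universal2 (T1 T2 U : graph) : Prop :=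
  iso_universal2 T1 T2 U /\
  forall (S : {set vert U}) (E : rel (vert U)),
    simple (subgraph S E) -> proper_sub S E -> ~ iso_universal2 T1 T2 (subgraph S E).

Definition connected (G : graph) : Prop :=
  forall u v : vert G, exists n, walk (adj G) u v n.

Definition acyclic (G : graph) : Prop :=
  forall c : seq (vert G), uniq c -> 3 <= size c -> ~~ cycle (adj G) c.

Definition tree (G : graph) : Prop :=
  simple G /\ 0 < #|vert G| /\ connected G /\ acyclic G.

(* Main.v *)
Require Import Defs.
From mathcomp Require Import all_boot zify.
Set Implicit Arguments. Unset Strict Implicit. Unset Printing Implicit Defensive.

Section Walks.
Variables (T : finType) (e : rel T).

Lemma walk0 x y : walk e x y 0 <-> x = y.
Proof.
split; first by case=> [[|? ?]] // /and3P [_ /eqP].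
by move=> ->; exists [::]; rewrite /= eqxx.
Qed.

Lemma walk_edge x y : e x y -> walk e x y 1.
Proof. by move=> h; exists [:: y]; rewrite /= h eqxx. Qed.

Lemma walk_cat x y z m n : walk e x y m -> walk e y z n -> walk e x z (m + n).
Proof.
case=> p /and3P [p1 /eqP l1 /eqP s1] [q /and3P [q1 /eqP l2 /eqP s2]].
exists (p ++ q); rewrite cat_path last_cat size_cat l1 p1 q1 l2 s1 s2 /=.
by rewrite !eqxx.
Qed.

Lemma walkS x z n : walk e x z n.+1 -> exists y, e x y /\ walk e y z n.
Proof.
case=> [[|y p]] /and3P [h0 h3 h4] //; move: h0 => /= /andP [h1 h2].
by exists y; split=> //; exists p; rewrite h2 h3 /= -eqSS h4.
Qed.

Lemma walkSr x z n : walk e x z n.+1 -> exists y, walk e x y n /\ e y z.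
Proof.
case=> p /and3P [h1 /eqP h2 /eqP h3].
case/lastP: p h1 h2 h3 => [|p y] // h1 h2 h3.
move: h1; rewrite rcons_path => /andP [h4 h5].
move: h2; rewrite last_rcons => h2; subst z.
exists (last x p); split; last by [].
by exists p; rewrite h4 eqxx /= -eqSS -(size_rcons p y) h3.
Qed.

Lemma walk_rev x y n : symmetric e -> walk e x y n -> walk e y x n.
Proof.
move=> sy; elim: n x y => [|n IH] x y.
  by move/walk0=> ->; apply/walk0.
case/walkS=> z [h1 h2].
have := walk_cat (IH _ _ h2) (walk_edge (_ : e z x)).
by rewrite addn1; apply; rewrite sy.
Qed.

Lemma walk_short x y n : walk e x y n ->
  exists q, [/\ path e x q, last x q = y, uniq (x :: q), size q <= n & size q < #|T|].
Proof.
case=> p /and3P [h1 /eqP h2 /eqP h3].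
rewrite -h2 -h3; case: (shortenP h1) => q hq1 hq2 hq3.
exists q; split=> //.
  apply: uniq_leq_size=> //.
  by case/andP: hq2.
have := max_card (mem (x :: q)).
by move/card_uniqP: hq2 => ->.
Qed.

Lemma walk_of_path x q : path e x q -> walk e x (last x q) (size q).
Proof. by move=> h; exists q; rewrite h !eqxx. Qed.

Definition walkb x y n := [exists p : n.-tuple T, path e x p && (last x p == y)].

Lemma walkbP x y n : reflect (walk e x y n) (walkb x y n).
Proof.
apply: (iffP existsP).
  by case=> p /andP [h1 h2]; exists p; rewrite h1 h2 size_tuple eqxx.
case=> p /and3P [h1 h2 /eqP h3].
have hp : size p == n by rewrite h3.
by exists (Tuple hp); rewrite /= h1 h2.
Qed.

Lemma dist_ex x y : exists n, walkb x y n || (#|T| <= n).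
Proof. by exists #|T|; rewrite leqnn orbT. Qed.

Definition dist x y := ex_minn (dist_ex x y).

Lemma dist_min x y n : walk e x y n -> dist x y <= n.
Proof.
move=> /walk_short [q [h1 h2 h3 h4 h5]].
rewrite /dist; case: ex_minnP => m _ hmin.
apply: leq_trans h4; apply: hmin.
by apply/orP; left; apply/walkbP; rewrite -h2; apply: walk_of_path.
Qed.

Lemma dist_walk x y n : walk e x y n -> walk e x y (dist x y).
Proof.
move=> w; have := dist_min w; move: w => /walk_short [q [h1 h2 h3 h4 h5]].
rewrite /dist; case: ex_minnP => m /orP [/walkbP //|hm] hmin _.
have : m <= size q.
  by apply: hmin; apply/orP; left; apply/walkbP; rewrite -h2; apply: walk_of_path.
by move=> h; move: (leq_trans hm h); rewrite leqNgt h5.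
Qed.

Lemma walk_map (T' : finType) (e' : rel T') (f : T -> T') x y n :
  (forall a b, e a b -> e' (f a) (f b)) -> walk e x y n -> walk e' (f x) (f y) n.
Proof.
move=> hf [p /and3P [h1 /eqP h2 /eqP h3]].
exists (map f p); rewrite size_map h3 eqxx andbT last_map h2 eqxx andbT.
by elim: p x h1 {h2 h3} => //= a p IH x /andP [h1 h2]; rewrite hf //= IH.
Qed.

End Walks.

Section Tree.
Variables (T : finType) (e : rel T).
Hypothesis sy : symmetric e.
Hypothesis irr : irreflexive e.
Hypothesis conn : forall x y : T, exists n, walk e x y n.
Hypothesis acyc : forall c : seq T, uniq c -> 3 <= size c -> ~~ cycle e c.

Local Notation d := (dist e).

Lemma dW x y : walk e x y (d x y).
Proof. by case: (conn x y) => n; apply: dist_walk. Qed.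

Lemma d_sym x y : d x y = d y x.
Proof.
by apply/eqP; rewrite eqn_leq !dist_min //; apply: walk_rev => //; apply: dW.
Qed.

Lemma d_tri x y z : d x z <= d x y + d y z.
Proof. by apply: dist_min; apply: walk_cat; apply: dW. Qed.

Lemma d_xx x : d x x = 0.
Proof. by apply/eqP; rewrite -leqn0; apply: dist_min; apply/walk0. Qed.

Lemma d0 x y : d x y = 0 -> x = y.
Proof. by move=> h; have := dW x y; rewrite h => /walk0. Qed.

Lemma d_adj x y : e x y -> d x y = 1.
Proof.
move=> h; apply/eqP; rewrite eqn_leq dist_min /=; last exact: walk_edge.
rewrite lt0n; apply/eqP=> /d0 hxy. by rewrite hxy irr in h.
Qed.

Lemma d1_adj x y : d x y = 1 -> e x y.
Proof.
move=> h; have := dW x y; rewrite h; case/walkS=> z [h1 /walk0 <-] //.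
Qed.

Lemma d_adjl x y z : e x y -> d x z <= (d y z).+1.
Proof. by move=> h; apply: leq_trans (d_tri x y z) _; rewrite d_adj. Qed.

Lemma NB x z : x != z -> exists p, e x p /\ (d p z).+1 = d x z.
Proof.
move=> hxz; have := dW x z; case hd: (d x z) => [|n].
  by move/d0: hd => h; rewrite h eqxx in hxz.
case/walkS=> p [h1 h2]; exists p; split=> //.
rewrite -hd; apply/eqP; rewrite eqn_leq d_adjl // andbT.
by rewrite hd ltnS dist_min.
Qed.

Lemma geo x y : exists q, [/\ path e x q, last x q = y & size q = d x y].
Proof. by case: (dW x y) => q /and3P [h1 /eqP h2 /eqP h3]; exists q. Qed.

Lemma walk_mem_dist x q u : path e x q -> u \in q -> d u (last x q) < size q.
Proof.
move=> hp hu; case/splitPr: hu hp => p1 p2; rewrite cat_path last_cat /= => /andP [_ /andP [_ h]].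
rewrite size_cat /= addnS ltnS (leq_trans _ (leq_addl _ _)) //.
by apply: dist_min; apply: walk_of_path.
Qed.

Definition eav (u : T) : rel T := fun a b => [&& a != u, b != u & e a b].

Lemma eav_sym u : symmetric (eav u).
Proof. by move=> a b; rewrite /eav sy andbCA. Qed.

Lemma path_eav u x q : path e x q -> x != u -> u \notin q -> path (eav u) x q.
Proof.
elim: q x => //= a q IH x /andP [h1 h2] hx; rewrite inE negb_or => /andP [ha hq].
by rewrite /eav hx eq_sym ha h1 /= IH // eq_sym.
Qed.

Lemma path_eav_notin u x q : path (eav u) x q -> u \notin q.
Proof.
elim: q x => //= a q IH x /andP [/and3P [_ h1 _] h2].
by rewrite inE negb_or eq_sym h1 (IH _ h2).
Qed.

Lemma CYC u p s n : e u p -> e u s -> p != s -> ~ walk (eav u) p s n.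
Proof.
move=> hp hs hps /walk_short [q [h1 h2 h3 _ _]].
have hu := path_eav_notin h1.
case: q h1 h2 h3 hu => [|a q] h1 h2 h3 hu.
  by rewrite /= in h2; rewrite h2 eqxx in hps.
have hpu : p != u by case/andP: h1 => /and3P [].
have hun : uniq [:: u, p, a & q].
  rewrite cons_uniq h3 andbT inE negb_or eq_sym hpu /=; exact: hu.
have hc : cycle e [:: u, p, a & q].
  rewrite /cycle rcons_path /= hp; move: h1 h2 => /= /andP [/and3P [_ _ ->] h1] h2.
  rewrite /=; apply/andP; split.
    by apply: sub_path h1 => a' b' /and3P [].
  by rewrite h2 sy.
by move: (acyc hun (isT : 3 <= size [:: u, p, a & q])); rewrite hc.
Qed.

Lemma FS u p s z : e u p -> e u s -> p != s -> (d p z).+1 = d u z ->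
  d s z = (d u z).+1.
Proof.
move=> hp hs hps hpz.
have h1 : d s z <= (d u z).+1 by apply: d_adjl; rewrite sy.
case: (ltnP (d u z) (d s z)) => h; first by apply/eqP; rewrite eqn_leq h1 h.
exfalso.
have [q1 [hq1 hl1 hs1]] := geo p z.
have [q2 [hq2 hl2 hs2]] := geo s z.
have hpu : p != u by apply/eqP=> hpu; rewrite hpu irr in hp.
have hsu : s != u by apply/eqP=> hsu; rewrite hsu irr in hs.
have hu1 : u \notin q1.
  apply/negP=> /(walk_mem_dist hq1); rewrite hl1 hs1 -hpz => /ltnW.
  by rewrite ltnn.
have hu2 : u \notin q2.
  apply/negP=> /(walk_mem_dist hq2); rewrite hl2 hs2 => h2.
  by move: (leq_trans h2 h); rewrite ltnn.
have w1 := walk_of_path (path_eav hq1 hpu hu1); rewrite hl1 in w1.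
have w2 := walk_of_path (path_eav hq2 hsu hu2); rewrite hl2 in w2.
apply: (CYC hp hs hps (walk_cat w1 (walk_rev (@eav_sym u) w2))).
Qed.

Lemma Glem n u w c p s : d u w = n -> e u p -> (d p w).+1 = d u w -> e u s ->
  (d s c).+1 = d u c -> p != s -> d w c = d u w + d u c.
Proof.
elim: n u p s => [|n IH] u p s hn hp hpw hs hsc hps.
  by rewrite -hpw in hn.
have hpc : d p c = (d u c).+1 by apply: (FS hs hp); rewrite // eq_sym.
case: (eqVneq p w) => [hpw'|hpw'].
  by subst p; rewrite hpc (d_adj hp) add1n.
have [p' [hp' hp'w]] := NB hpw'.
have hp'u : p' != u.
  by apply/eqP=> h; move: hp'w hpw; rewrite h; lia.
have h1 : d p w = n by apply/eqP; rewrite -eqSS hpw hn.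
have h2 : e p u by rewrite sy.
have h3 : (d u c).+1 = d p c by rewrite hpc.
rewrite (IH p p' u h1 hp' hp'w h2 h3 hp'u) hpc -hpw; lia.
Qed.

Lemma TL u p w c : e u p -> (d p w).+1 = d u w ->
  d p c = if d w c + 2 <= d u w + d u c then (d u c).-1 else (d u c).+1.
Proof.
move=> hp hpw.
case: (eqVneq u c) => [<-|huc].
  rewrite d_xx addn0 d_sym d_adj //= ifN //.
  by rewrite -ltnNge d_sym addn2 ltnS leqnSn.
have [s [hs hsc]] := NB huc.
case: (eqVneq p s) => [hps|hps].
  subst s; rewrite ifT -hsc //.
  have := d_tri w p c; rewrite (d_sym w p); lia.
rewrite (FS hs hp) 1?eq_sym // ifN //.
rewrite (@Glem (d u w) u w c p s) //.
lia.
Qed.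

End Tree.

Lemma walk1 (T : finType) (e : rel T) x y : walk e x y 1 -> e x y.
Proof. by case/walkS=> z [h /walk0 <-]. Qed.

Lemma is_dist_transfer (A B : finType) (eA : rel A) (eB : rel B) a b a' b' :
  (forall n, walk eA a b n -> walk eB a' b' n) ->
  (forall n, walk eB a' b' n -> exists2 m, m <= n & walk eA a b m) ->
  forall dd, is_dist eA a b dd <-> is_dist eB a' b' dd.
Proof.
move=> fw bw [n|] /=; split.
- case=> w hmin; split; first exact: fw.
  by move=> m /bw [m' hm' w']; exact: (leq_trans (hmin _ w') hm').
- case=> w hmin; case: (bw _ w) => m hm wm.
  have hnm := hmin _ (fw _ wm).
  have em : m = n by apply/eqP; rewrite eqn_leq hm hnm.
  subst m.
  by split=> // k /fw; apply: hmin.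
- by move=> hA m /bw [m' _ w']; apply: (hA m').
- by move=> hB m /fw; apply: hB.
Qed.

Definition iso_emb (H G : graph) (g : vert H -> vert G) :=
  [/\ injective g, (forall x y, adj H x y = adj G (g x) (g y)) &
      (forall x y n, walk (adj G) (g x) (g y) n -> exists2 m, m <= n & walk (adj H) x y m)].

Lemma emb_iso (H G : graph) (g : vert H -> vert G) :
  simple H -> iso_emb g -> isometric_sub H G.
Proof.
move=> [sH iH] [ginj gadj gw].
pose S := [set v | v \in codom g].
pose E : rel (vert G) := fun a b => [exists x, exists y, [&& g x == a, g y == b & adj H x y]].
have gS x : g x \in S by rewrite inE codom_f.
pose f x : vert (subgraph S E) := exist (fun v => v \in S) (g x) (gS x).
have Eg x y : E (g x) (g y) = adj H x y.
  apply/existsP/idP=> [[x' /existsP [y' /and3P [/eqP/ginj -> /eqP/ginj -> //]]]|h].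
  by exists x; apply/existsP; exists y; rewrite !eqxx h.
have adjf x y : adj (subgraph S E) (f x) (f y) = adj H x y.
  by rewrite /= Eg -gadj andbb.
have finj : injective f by move=> x y /(congr1 val) /= /ginj.
have fbij : bijective f.
  apply: (inj_card_bij finj); rewrite card_sig.
  have -> : #|[pred x | x \in S]| = #|codom g|.
    by apply: eq_card=> v; rewrite inE.
  by rewrite card_codom.
case: fbij => fi fK fiK.
have adjfi a b : adj (subgraph S E) a b = adj H (fi a) (fi b).
  by rewrite -adjf !fiK.
exists S, E; split.
- split.
  + by move=> a b; rewrite !adjfi sH.
  + by move=> a; rewrite adjfi iH.
split.
  exists f; split; first exact: (Bijective fK fiK).
  by move=> x y; rewrite adjf.
move=> a b dd; rewrite -(fiK a) -(fiK b).
set x := fi a; set y := fi b.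
apply: is_dist_transfer => n.
  move=> w0; have w : walk (adj H) x y n.
    rewrite -[x]fK -[y]fK; apply: (walk_map (f := fi)) w0 => a' b'.
    by rewrite adjfi.
  by apply: (walk_map (f := g)) w => a' b'; rewrite gadj.
move=> /= /gw [m hm w]; exists m => //.
by apply: (walk_map (f := f)) w => a' b'; have := adjf a' b'; rewrite /= => ->.
Qed.

Lemma iso_emb_of (H G : graph) : simple G -> isometric_sub H G ->
  exists g : vert H -> vert G, iso_emb g.
Proof.
move=> [sG iG] [S [E [sSE [[f [[fi fK fiK] fadj]] hd]]]].
exists (fun x => val (f x)).
have adjfi a b : adj (subgraph S E) a b = adj H (fi a) (fi b).
  by rewrite fadj !fiK.
have back x y n : walk (adj (subgraph S E)) (f x) (f y) n -> walk (adj H) x y n.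
  move=> w; rewrite -[x]fK -[y]fK; apply: (walk_map (f := fi)) w => a b.
  by rewrite adjfi.
split.
- by move=> x y /val_inj /(can_inj fK).
- move=> x y; apply/idP/idP.
    by rewrite fadj /= => /andP [].
  move=> h.
  have hd1 : is_dist (adj G) (val (f x)) (val (f y)) (Some 1).
    split; first exact: walk_edge.
    case=> // /walk0 hxy; by rewrite hxy iG in h.
  by move/hd: hd1 => [/walk1]; rewrite fadj.
- move=> x y n w.
  have hw := dist_walk w; have hm := dist_min w.
  exists (dist (adj G) (val (f x)) (val (f y))) => //.
  apply: back; apply: (proj1 (proj2 (hd _ _ (Some _)) _)).
  by split=> // m; apply: dist_min.
Qed.

Section TreeG.
Variable G : graph.
Hypothesis tG : tree G.
Local Notation e := (adj G).
Local Notation d := (dist (adj G)).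
Let sy : symmetric e. Proof. by case: tG => [[]]. Qed.
Let irr : irreflexive e. Proof. by case: tG => [[]]. Qed.
Let conn : connected G. Proof. by case: tG => _ [_ []]. Qed.
Let acyc : acyclic G. Proof. by case: tG => _ [_ []]. Qed.

Lemma tdW x y : walk e x y (d x y). Proof. by apply: dW. Qed.
Lemma td_sym x y : d x y = d y x. Proof. by apply: d_sym. Qed.
Lemma td_tri x y z : d x z <= d x y + d y z. Proof. by apply: d_tri. Qed.
Lemma td_xx x : d x x = 0. Proof. by apply: d_xx. Qed.
Lemma td0 x y : d x y = 0 -> x = y. Proof. by apply: d0. Qed.
Lemma td_adj x y : e x y -> d x y = 1. Proof. by apply: d_adj. Qed.
Lemma td1_adj x y : d x y = 1 -> e x y. Proof. by apply: d1_adj. Qed.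
Lemma td_adjl x y z : e x y -> d x z <= (d y z).+1. Proof. by apply: d_adjl. Qed.
Lemma tNB x z : x != z -> exists p, e x p /\ (d p z).+1 = d x z.
Proof. by apply: NB. Qed.
Lemma tFS u p s z : e u p -> e u s -> p != s -> (d p z).+1 = d u z ->
  d s z = (d u z).+1.
Proof. by apply: FS. Qed.
Lemma tTL u p w c : e u p -> (d p w).+1 = d u w ->
  d p c = if d w c + 2 <= d u w + d u c then (d u c).-1 else (d u c).+1.
Proof. by apply: TL. Qed.
Lemma tCYC u p s n : e u p -> e u s -> p != s -> ~ walk (eav e u) p s n.
Proof. by apply: CYC. Qed.
Lemma tsym : symmetric e. Proof. exact: sy. Qed.
Lemma tirr : irreflexive e. Proof. exact: irr. Qed.
End TreeG.

Section Glue.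
Variables T1 T2 : graph.
Hypothesis t1 : tree T1.
Hypothesis t2 : tree T2.
Local Notation d1 := (dist (adj T1)).
Local Notation d2 := (dist (adj T2)).
Variable J : {set vert T2}.
Variable h : vert T2 -> vert T1.
Hypothesis hinj : {in J &, injective h}.
Hypothesis hiso : forall a b, a \in J -> b \in J -> d1 (h a) (h b) = d2 a b.

Definition VW := (vert T1 + {x : vert T2 | x \notin J})%type.

Definition adjW : rel VW := fun a b =>
  match a, b with
  | inl x, inl y => adj T1 x y
  | inl x, inr y => [exists c in J, (h c == x) && adj T2 c (val y)]
  | inr x, inl y => [exists c in J, (h c == y) && adj T2 (val x) c]
  | inr x, inr y => adj T2 (val x) (val y)
  end.

Definition W := Graph adjW.

Lemma W_simple : simple W.
Proof.
split.
- case=> [x|x] [y|y] //=; first exact: tsym.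
  + apply/existsP/existsP=> [[c hc]|[c hc]]; exists c; move: hc;
    by rewrite (tsym t2 c).
  + apply/existsP/existsP=> [[c hc]|[c hc]]; exists c; move: hc;
    by rewrite (tsym t2 c).
  + exact: tsym.
- by case=> [x|x] /=; apply: tirr.
Qed.

Lemma hadj a b : a \in J -> b \in J -> adj T1 (h a) (h b) = adj T2 a b.
Proof.
move=> ha hb; apply/idP/idP=> H.
  by apply: td1_adj => //; rewrite -hiso // td_adj.
by apply: td1_adj => //; rewrite hiso // td_adj.
Qed.

Definition g2 (x : vert T2) : VW :=
  match insub x with Some y => inr y | None => inl (h x) end.

Lemma g2_in x : x \in J -> g2 x = inl (h x).
Proof. by move=> hx; rewrite /g2 insubF // hx. Qed.

Lemma g2_out x (hx : x \notin J) : g2 x = inr (exist _ x hx).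
Proof. by rewrite /g2 insubT. Qed.

Lemma emb1 : iso_emb (H := T1) (G := W) inl.
Proof.
split.
- by move=> x y [].
- by [].
move=> x y n w.
suff : forall n v, walk adjW (inl x) v n ->
  match v with inl a => is_true (d1 x a <= n)
  | inr b => exists2 c, c \in J & d1 x (h c) + d2 c (val b) <= n end.
  by move=> /(_ n (inl y) w) hy; exists (d1 x y) => //; apply: tdW.
elim=> [|k IH] v.
  by move/walk0=> <-; rewrite td_xx.
case/walkSr=> v' [/IH hv' ha].
case: v' hv' ha => [a'|b'] hv'; case: v => [a|b] /= ha.
- have := td_tri t1 x a' a; have := td_adj t1 ha; lia.
- case/existsP: ha => c /and3P [hc /eqP hca hcb].
  exists c => //; rewrite hca; have := td_adj t2 hcb.
  change (sval b) with (val b); lia.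
- case/existsP: ha => c' /and3P [hc' /eqP hca hcb].
  case: hv' => c hc hk.
  have := td_tri t1 x (h c) a; rewrite -hca hiso //.
  have := td_tri t2 c (val b') c'; have := td_adj t2 hcb; change (sval b') with (val b'); lia.
- case: hv' => c hc hk; exists c => //.
  have := td_tri t2 c (val b') (val b); have := td_adj t2 ha.
  change (sval b') with (val b'); change (sval b) with (val b); lia.
Qed.

Lemma emb2 : iso_emb (H := T2) (G := W) g2.
Proof.
split.
- move=> x y; case: (boolP (x \in J)) => hx; case: (boolP (y \in J)) => hy.
  + by rewrite (g2_in hx) (g2_in hy) => -[]; apply: hinj.
  + by rewrite (g2_in hx) (g2_out hy).
  + by rewrite (g2_out hx) (g2_in hy).
  + by rewrite (g2_out hx) (g2_out hy) => -[].
- move=> x y; case: (boolP (x \in J)) => hx; case: (boolP (y \in J)) => hy.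
  + by rewrite (g2_in hx) (g2_in hy) /= hadj.
  + rewrite (g2_in hx) (g2_out hy) /=; apply/idP/existsP=> [H|[c /and3P [hc /eqP hcx H]]].
      by exists x; rewrite hx eqxx.
    by rewrite -(hinj hc hx hcx).
  + rewrite (g2_out hx) (g2_in hy) /=; apply/idP/existsP=> [H|[c /and3P [hc /eqP hcx H]]].
      by exists y; rewrite hy eqxx.
    by rewrite -(hinj hc hy hcx).
  + by rewrite (g2_out hx) (g2_out hy).
move=> x y n w.
suff : forall n v, walk adjW (g2 x) v n ->
  match v with
  | inl a => exists2 c, c \in J & d2 x c + d1 (h c) a <= n
  | inr b => is_true (d2 x (val b) <= n) end.
  move=> /(_ n (g2 y) w) hy; exists (d2 x y); last by apply: tdW.
  case: (boolP (y \in J)) => hyJ.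
    move: hy; rewrite (g2_in hyJ) => -[c hc]; rewrite hiso //.
    by have := td_tri t2 x c y; lia.
  by move: hy; rewrite (g2_out hyJ).
elim=> [|k IH] v.
  move/walk0=> <-; case: (boolP (x \in J)) => hx.
    by rewrite (g2_in hx); exists x => //; rewrite !td_xx.
  by rewrite (g2_out hx) /= td_xx.
case/walkSr=> v' [/IH hv' ha].
case: v' hv' ha => [a'|b'] hv'; case: v => [a|b] /= ha.
- case: hv' => c hc hk; exists c => //.
  have := td_tri t1 (h c) a' a; have := td_adj t1 ha; lia.
- case/existsP: ha => c' /and3P [hc' /eqP hca hcb].
  case: hv' => c hc hk.
  rewrite -hca (hiso hc hc') in hk.
  have := td_tri t2 x c' (val b); have := td_tri t2 x c c'.
  have := td_adj t2 hcb; change (sval b) with (val b); lia.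
- case/existsP: ha => c' /and3P [hc' /eqP hca hcb].
  exists c' => //; rewrite hca td_xx addn0.
  have := td_tri t2 x (val b') c'; have := td_adj t2 hcb.
  change (sval b') with (val b'); lia.
- have := td_tri t2 x (val b') (val b); have := td_adj t2 ha.
  change (sval b') with (val b'); change (sval b) with (val b); lia.
Qed.

Lemma glue_card : #|vert W| = #|vert T1| + (#|vert T2| - #|J|).
Proof.
rewrite /= card_sum card_sig; congr (_ + _).
rewrite -(cardsC J) addKn; apply: eq_card=> x; by rewrite !inE.
Qed.

End Glue.

Lemma glue (T1 T2 : graph) : tree T1 -> tree T2 ->
  forall (J : {set vert T2}) (h : vert T2 -> vert T1),
  {in J &, injective h} ->
  (forall a b, a \in J -> b \in J -> dist (adj T1) (h a) (h b) = dist (adj T2) a b) ->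
  exists W : graph, [/\ simple W, iso_universal2 T1 T2 W &
     #|vert W| = #|vert T1| + (#|vert T2| - #|J|)].
Proof.
move=> t1 t2 J h hinj hiso; exists (W J h).
split.
- exact: W_simple.
- split.
    apply: emb_iso (emb1 t1 t2 hiso); by case: t1.
  apply: emb_iso (emb2 t1 t2 hinj hiso); by case: t2.
- exact: glue_card.
Qed.

Lemma path_map_in (T T' : Type) (e : rel T) (e' : rel T') (f : T -> T') (P : pred T) x p :
  P x -> all P p -> (forall a b, P a -> P b -> e a b -> e' (f a) (f b)) ->
  path e x p -> path e' (f x) (map f p).
Proof.
move=> hx hp hf; elim: p x hx hp => //= a p IH x hx /andP [ha hp] /andP [h1 h2].
by rewrite hf //= IH.
Qed.

Lemma SEG (T : eqType) (P : pred T) x q : P x -> P (last x q) -> has (predC P) q ->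
  exists q1 y q2 z q3, [/\ q = q1 ++ y :: q2 ++ z :: q3, ~~ P y, all (predC P) q2,
     P z & P (last x q1)].
Proof.
elim: q x => //= a q IH x hx hl hh.
case: (boolP (P a)) => hPa.
  have hq : has (predC P) q by move: hh; rewrite /= hPa.
  case: (IH a hPa hl hq) => q1 [y [q2 [z [q3 [-> h1 h2 h3 h4]]]]].
  by exists (a :: q1), y, q2, z, q3.
have hq : has P q.
  case: q hl {IH hh} => [|b q] hl; first by rewrite /= hl in hPa.
  by apply/hasP; exists (last b q); rewrite ?mem_last.
case: (split_find hq) => z s1 s2 hz hs1.
exists [::], a, s1, z, s2; split=> //.
  by rewrite cat_rcons.
by apply/allP=> t ht /=; apply: contraNN hs1 => hPt; apply/hasP; exists t.
Qed.

Lemma emb_restrict (H G : graph) (g : vert H -> vert G) (S : {set vert G}) (E : rel (vert G))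
  (gS : forall x, g x \in S) :
  iso_emb g -> (forall x y, adj H x y -> E (g x) (g y)) ->
  iso_emb (H := H) (G := subgraph S E) (fun x => exist (fun v => v \in S) (g x) (gS x)).
Proof.
move=> [ginj gadj gw] hE; split.
- by move=> x y /(congr1 val) /ginj.
- move=> x y /=; apply/idP/idP=> [h|/andP [_ h]]; last by rewrite gadj.
  by rewrite hE // -gadj.
- move=> x y n w; apply: gw.
  by apply: (walk_map (f := val)) w => a b /andP [].
Qed.

Lemma dist_le (H K G : graph) (gH : vert H -> vert G) (gK : vert K -> vert G) :
  connected H -> iso_emb gH -> iso_emb gK -> forall x1 y1 x2 y2,
  gH x1 = gK x2 -> gH y1 = gK y2 -> dist (adj K) x2 y2 <= dist (adj H) x1 y1.
Proof.
move=> cH [_ hadj _] [_ _ kw] x1 y1 x2 y2 hx hy.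
have [n w0] := cH x1 y1.
have w := dist_walk w0.
have w' : walk (adj G) (gK x2) (gK y2) (dist (adj H) x1 y1).
  by rewrite -hx -hy; apply: (walk_map (f := gH)) w => a b; rewrite -hadj.
case: (kw _ _ _ w') => m hm wm.
exact: leq_trans (dist_min wm) hm.
Qed.

Section Main.
Variables T1 T2 U : graph.
Hypothesis t1 : tree T1.
Hypothesis t2 : tree T2.
Hypothesis sU : simple U.
Hypothesis minU : minimum_universal2 T1 T2 U.
Hypothesis minlU : minimal_universal2 T1 T2 U.
Variable g1 : vert T1 -> vert U.
Variable g2 : vert T2 -> vert U.
Hypothesis ge1 : iso_emb g1.
Hypothesis ge2 : iso_emb g2.
Local Notation d1 := (dist (adj T1)).
Local Notation d2 := (dist (adj T2)).

Definition A := [set v | v \in codom g1].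
Definition B := [set v | v \in codom g2].

Lemma g1A x : g1 x \in A. Proof. by rewrite inE codom_f. Qed.
Lemma g2B x : g2 x \in B. Proof. by rewrite inE codom_f. Qed.

Lemma cover_edges : (forall v, (v \in A) || (v \in B)) /\
  (forall a b, adj U a b -> ((a \in A) && (b \in A)) || ((a \in B) && (b \in B))).
Proof.
pose S := A :|: B.
pose E : rel (vert U) := fun a b => ((a \in A) && (b \in A)) || ((a \in B) && (b \in B)).
have gS1 x : g1 x \in S by rewrite inE g1A.
have gS2 x : g2 x \in S by rewrite inE g2B orbT.
have Esym a b : E a b = E b a by rewrite /E andbC (andbC (b \in B)).
have hsimp : simple (subgraph S E).
  case: sU => sy ir; split.
    by move=> a b /=; rewrite sy Esym.
  by move=> a /=; rewrite ir andbF.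
have huniv : iso_universal2 T1 T2 (subgraph S E).
  split.
    apply: emb_iso; first by case: t1.
    apply: (emb_restrict gS1 ge1) => x y _; by rewrite /E !g1A.
  apply: emb_iso; first by case: t2.
  apply: (emb_restrict gS2 ge2) => x y _; by rewrite /E !g2B orbT.
have [_ hm0] := minlU; have hm := hm0 S E hsimp.
split.
  move=> v; case: (eqVneq S setT) => hS.
    have : v \in S by rewrite hS inE.
    by rewrite inE.
  by exfalso; apply: hm huniv; left.
move=> a b hab; case hE: (E a b) => //.
by exfalso; apply: hm huniv; right; exists a, b; rewrite hab hE.
Qed.

Variable x01 : vert T1.
Variable x02 : vert T2.

Definition inv1 v := odflt x01 [pick x | g1 x == v].
Definition inv2 v := odflt x02 [pick x | g2 x == v].

Lemma inv1K x : inv1 (g1 x) = x.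
Proof.
rewrite /inv1; case: pickP => [y /eqP|/(_ x)]; last by rewrite eqxx.
by case: ge1 => gi _ _ /gi.
Qed.

Lemma inv2K x : inv2 (g2 x) = x.
Proof.
rewrite /inv2; case: pickP => [y /eqP|/(_ x)]; last by rewrite eqxx.
by case: ge2 => gi _ _ /gi.
Qed.

Lemma g1inv v : v \in A -> g1 (inv1 v) = v.
Proof. by rewrite inE => /codomP [x ->]; rewrite inv1K. Qed.

Lemma g2inv v : v \in B -> g2 (inv2 v) = v.
Proof. by rewrite inE => /codomP [x ->]; rewrite inv2K. Qed.

Lemma c1 : connected T1. Proof. by case: t1 => _ [_ []]. Qed.
Lemma c2 : connected T2. Proof. by case: t2 => _ [_ []]. Qed.

Lemma dist12 x1 y1 x2 y2 : g1 x1 = g2 x2 -> g1 y1 = g2 y2 -> d1 x1 y1 = d2 x2 y2.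
Proof.
move=> hx hy; apply/eqP; rewrite eqn_leq.
rewrite (dist_le c2 ge2 ge1 (esym hx) (esym hy)).
by rewrite (dist_le c1 ge1 ge2 hx hy).
Qed.

Definition J := [set x | g2 x \in A].
Definition h x := inv1 (g2 x).

Lemma inJ x : (x \in J) = (g2 x \in A). Proof. by rewrite [in LHS]inE. Qed.

Lemma hJinj : {in J &, injective h}.
Proof.
move=> a b; rewrite !inJ => ha hb /(congr1 g1); rewrite !g1inv //.
by case: ge2 => gi _ _ /gi.
Qed.

Lemma hJiso a b : a \in J -> b \in J -> d1 (h a) (h b) = d2 a b.
Proof. by rewrite !inJ => ha hb; apply: dist12; rewrite g1inv. Qed.

Lemma cardU_ge : #|vert T1| + #|vert T2| - #|J| <= #|vert U|.
Proof.
have hA : #|A| = #|vert T1|.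
  rewrite -(card_codom (f := g1)); last by case: ge1.
  by apply: eq_card=> v; rewrite inE.
have hB : #|B| = #|vert T2|.
  rewrite -(card_codom (f := g2)); last by case: ge2.
  by apply: eq_card=> v; rewrite inE.
have hAB : #|A :&: B| = #|J|.
  have -> : A :&: B = g2 @: J.
    apply/setP=> v; rewrite in_setI; apply/andP/imsetP.
      case=> hv; rewrite [in X in X -> _]inE => /codomP [x hx]; exists x => //.
      by rewrite inJ -hx.
    by case=> x; rewrite inJ => hx ->; rewrite hx g2B.
  by apply: card_imset; case: ge2.
rewrite -hA -hB -hAB -cardsU; exact: max_card.
Qed.

Lemma J_bound (J' : {set vert T2}) (h' : vert T2 -> vert T1) :
  {in J' &, injective h'} ->
  (forall a b, a \in J' -> b \in J' -> d1 (h' a) (h' b) = d2 a b) ->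
  #|J'| <= #|J|.
Proof.
move=> hi hd; have [W [sW uW cW]] := glue t1 t2 hi hd.
have := proj2 minU W sW uW; rewrite cW => hle.
have := cardU_ge.
have hJ1 : #|J'| <= #|vert T2| by apply: max_card.
have hJ2 : #|J| <= #|vert T2| by apply: max_card.
lia.
Qed.

Lemma J_nonempty : exists u0, u0 \in J.
Proof.
case: (set_0Vmem J) => [J0|[u hu]]; last by exists u.
exfalso.
have hb : #|[set x02]| <= #|J|.
  apply: (@J_bound _ (fun _ => x01)) => a b; rewrite !inE => /eqP -> /eqP -> //.
  by rewrite !td_xx.
by move: hb; rewrite J0 cards1 cards0.
Qed.

Lemma adjB a b : a \in B -> b \in B -> adj T2 (inv2 a) (inv2 b) = adj U a b.
Proof. by move=> ha hb; case: ge2 => _ -> _; rewrite !g2inv. Qed.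

Lemma adjA a b : a \in A -> b \in A -> adj T1 (inv1 a) (inv1 b) = adj U a b.
Proof. by move=> ha hb; case: ge1 => _ -> _; rewrite !g1inv. Qed.

Lemma inv2_inj a b : a \in B -> b \in B -> inv2 a = inv2 b -> a = b.
Proof. by move=> ha hb /(congr1 g2); rewrite !g2inv. Qed.

Lemma inv1_inj a b : a \in A -> b \in A -> inv1 a = inv1 b -> a = b.
Proof. by move=> ha hb /(congr1 g1); rewrite !g1inv. Qed.

Lemma U_conn : connected U.
Proof.
have [u0 hu0] := J_nonempty.
have [cov _] := cover_edges.
have hr : forall v, exists n, walk (adj U) v (g2 u0) n.
  move=> v; case/orP: (cov v); rewrite inE => /codomP [x ->].
    have [n w] := c1 x (h u0); exists n.
    have <- : g1 (h u0) = g2 u0 by rewrite g1inv // -inJ.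
    by apply: (walk_map (f := g1)) w => a b; case: ge1 => _ ->.
  have [n w] := c2 x u0; exists n.
  by apply: (walk_map (f := g2)) w => a b; case: ge2 => _ ->.
move=> v w; have [n1 w1] := hr v; have [n2 w2] := hr w.
exists (n1 + n2); apply: walk_cat w1 _; apply: walk_rev w2; by case: sU.
Qed.

Lemma cycle_map_in (T T' : eqType) (e : rel T) (e' : rel T') (f : T -> T') (P : pred T) c :
  all P c -> (forall a b, P a -> P b -> e a b -> e' (f a) (f b)) ->
  cycle e c -> cycle e' (map f c).
Proof.
case: c => [|x p] //= /andP [hx hp] hf hc.
rewrite -map_rcons; apply: (path_map_in (P := P)) hc => //.
by rewrite all_rcons hx hp.
Qed.

Lemma acyc1 : acyclic T1. Proof. by case: t1 => _ [_ []]. Qed.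
Lemma acyc2 : acyclic T2. Proof. by case: t2 => _ [_ []]. Qed.

Lemma U_acyc : acyclic U.
Proof.
move=> c huq hsz; apply/negP => hcyc.
have [cov edg] := cover_edges.
case: (boolP (all (fun v => v \in A) c)) => hallA.
  have := acyc1 (c := map inv1 c).
  rewrite size_map (map_inj_in_uniq (f := inv1)) //; last first.
    by move=> a b ha hb; apply: inv1_inj; [move/allP: hallA; apply|move/allP: hallA; apply].
  move=> /(_ huq hsz) /negP; apply.
  by apply: (cycle_map_in hallA) hcyc => a b ha hb; rewrite adjA.
case: (boolP (all (fun v => v \in B) c)) => hallB.
  have := acyc2 (c := map inv2 c).
  rewrite size_map (map_inj_in_uniq (f := inv2)) //; last first.
    by move=> a b ha hb; apply: inv2_inj; [move/allP: hallB; apply|move/allP: hallB; apply].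
  move=> /(_ huq hsz) /negP; apply.
  by apply: (cycle_map_in hallB) hcyc => a b ha hb; rewrite adjB.
case/allPn: hallA => v hvc hvA.
case/allPn: hallB => a0 ha0c ha0B.
have ha0A : a0 \in A by move: (cov a0); rewrite (negbTE ha0B) orbF.
case: (rot_to ha0c) => i s hrot.
have hcyc' : cycle (adj U) (a0 :: s) by rewrite -hrot rot_cycle.
have huq' : uniq (a0 :: s) by rewrite -hrot rot_uniq.
have hvs : v \in a0 :: s by rewrite -hrot mem_rot.
move: hcyc'; rewrite /cycle rcons_path => /andP [hps hla].
have hlast : last a0 s \in A.
  by move: (edg _ _ hla); rewrite (negbTE ha0B) andbF orbF => /andP [].
have hhas : has (predC (fun v => v \in A)) s.
  move: hvs; rewrite inE => /orP [/eqP hv|hv]; first by rewrite hv ha0A in hvA.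
  by apply/hasP; exists v.
case: (SEG ha0A hlast hhas) => q1 [y [q2 [z [q3 [hs hy hq2 hz hu]]]]].
set u := last a0 q1 in hu.
have {}hy : (y \in A) = false by apply/negbTE.
have {}hz : z \in A by [].
have {}hu : u \in A by [].
move: hps; rewrite hs cat_path => /andP [_]; rewrite -/u /= => /andP [huy].
rewrite cat_path /= => /andP [hpq2 /andP [hlz _]].
have hyB : y \in B by move: (cov y); rewrite hy.
have huB : u \in B.
  by move: (edg _ _ huy); rewrite hy andbF /= => /andP [].
have hlq2 : last y q2 \notin A.
  have : last y q2 \in y :: q2 by apply: mem_last.
  rewrite inE => /orP [/eqP ->|]; first by rewrite hy.
  by move/allP: hq2 => hq2' /hq2'.
have hzB : z \in B.
  by move: (edg _ _ hlz); rewrite (negbTE hlq2) /= => /andP [].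
have hallB2 : all (fun v => v \in B) (rcons q2 z).
  rewrite all_rcons hzB /=; apply/allP=> t ht.
  move/allP: hq2 => /(_ t ht) /= htA.
  have {}htA : (t \in A) = false by apply/negbTE.
  by move: (cov t); rewrite htA.
move: huq'; rewrite hs -cat_cons cat_uniq => /and3P [_ hnh huq2].
have hun : u \notin y :: q2 ++ z :: q3.
  apply: contra hnh => hin; apply/hasP; exists u => //.
  by rewrite /u mem_last.
have huz : u != z.
  by apply: contraNneq hun => ->; rewrite !inE mem_cat inE eqxx !orbT.
have huy' : u != y by apply: contraNneq hun => ->; rewrite inE eqxx.
have hunr : u \notin rcons q2 z.
  apply: contra hun => hin; rewrite inE mem_cat inE; move: hin.
  by rewrite mem_rcons inE => /orP [->|->]; rewrite ?orbT.
set u2 := inv2 u; set y2 := inv2 y; set w2 := inv2 z.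
have hpath : path (adj T2) y2 (map inv2 (rcons q2 z)).
  apply: (path_map_in (e := adj U) (P := fun v => v \in B)) => //.
    by move=> a b ha hb hab; rewrite adjB.
  by rewrite rcons_path hpq2 hlz.
have hpe : path (eav (adj T2) u2) y2 (map inv2 (rcons q2 z)).
  apply: path_eav hpath _ _.
    by apply: contra_neq huy' => /inv2_inj -> //.
  apply/mapP=> -[t ht htu].
  have htu' : u = t by apply: inv2_inj => //; move/allP: hallB2; apply.
  by rewrite htu' ht in hunr.
have hwe := walk_of_path hpe.
rewrite last_map last_rcons -/w2 in hwe.
have hu2y2 : adj T2 u2 y2 by rewrite adjB.
have hu2w2 : u2 != w2 by apply: contra_neq huz => /inv2_inj -> //.
have hyw : (d2 y2 w2).+1 = d2 u2 w2.
  have [p [hp hpw]] := tNB t2 hu2w2.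
  case: (eqVneq y2 p) => [-> //|hne].
  exfalso.
  have [q [hq hql hqs]] := geo c2 p w2.
  have hpu : p != u2 by apply: contraTneq hp => ->; rewrite tirr.
  have hnq : u2 \notin q.
    apply/negP=> /(walk_mem_dist hq); rewrite hql hqs -hpw => /ltnW.
    by rewrite ltnn.
  have := walk_of_path (path_eav hq hpu hnq); rewrite hql => hw2.
  apply: (tCYC t2 hu2y2 hp hne).
  exact: walk_cat hwe (walk_rev (eav_sym (tsym t2) u2) hw2).
have hu2J : u2 \in J by rewrite inJ /u2 g2inv.
have hw2J : w2 \in J by rewrite inJ /w2 g2inv.
set u1 := h u2; set w1 := h w2.
have hu1w1 : u1 != w1 by apply: contra_neq hu2w2 => /hJinj; apply.
have [y1 [hy1 hy1w]] := tNB t1 hu1w1.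
have hd_uw : d1 u1 w1 = d2 u2 w2 by apply: hJiso.
have hy2 : g2 y2 = y by rewrite g2inv.
have hy2J : y2 \notin J by rewrite inJ hy2 hy.
have hy1B : g1 y1 \notin B.
  apply/negP=> hB.
  set cc := inv2 (g1 y1).
  have hgc : g2 cc = g1 y1 by rewrite g2inv.
  have hcJ : cc \in J by rewrite inJ hgc g1A.
  have hhc : h cc = y1 by rewrite /h hgc inv1K.
  have hu2c : adj T2 u2 cc.
    apply: (td1_adj t2); rewrite -hJiso // hhc.
    have := td_adj t1 hy1; rewrite /u1; exact: id.
  have hcw : d2 cc w2 = d1 y1 w1 by rewrite -hhc hJiso.
  case: (eqVneq y2 cc) => [hyc|hyc].
    by move: hy; rewrite -hy2 hyc hgc g1A.
  have := tFS t2 hu2y2 hu2c hyc hyw.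
  rewrite hcw -hd_uw -hy1w => H; clear -H; lia.
have keyTL b : b \in J -> d1 y1 (h b) = d2 y2 b.
  move=> hb.
  rewrite (tTL t1 (h b) hy1 hy1w) (tTL t2 b hu2y2 hyw).
  have e1 : d1 w1 (h b) = d2 w2 b := hJiso hw2J hb.
  have e2 : d1 u1 (h b) = d2 u2 b := hJiso hu2J hb.
  rewrite e1 e2 hd_uw; reflexivity.
pose J' := y2 |: J.
pose h' x := if x == y2 then y1 else h x.
have hb := @J_bound J' h'.
have neqJ x : x \in J -> (x == y2) = false.
  by move=> hx; apply/negbTE; apply: contraNneq hy2J => <-.
have hyh x : x \in J -> y1 <> h x.
  move=> hx hyx; move: hy1B; rewrite hyx /h g1inv ?g2B //; by rewrite -inJ.
have : #|J'| <= #|J|.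
  apply: hb.
    move=> a b; rewrite /J' !in_setU1 /h' => /orP [/eqP ->|ha] /orP [/eqP ->|hb'] //.
    + by rewrite eqxx (neqJ _ hb') => hyb; case: (hyh _ hb' hyb).
    + by rewrite eqxx (neqJ _ ha) => hyb; case: (hyh _ ha (esym hyb)).
    + by rewrite (neqJ _ hb') (neqJ _ ha); apply: hJinj.
  move=> a b; rewrite /J' !in_setU1 /h' => /orP [/eqP ->|ha] /orP [/eqP ->|hb'].
  + by rewrite eqxx !td_xx.
  + by rewrite eqxx (neqJ _ hb'); apply: keyTL.
  + by rewrite eqxx (neqJ _ ha) (td_sym t1) keyTL // (td_sym t2).
  + by rewrite (neqJ _ hb') (neqJ _ ha); apply: hJiso.
by rewrite /J' cardsU1 hy2J add1n ltnn.
Qed.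

End Main.

Unset Implicit Arguments.

Theorem theorem2 (T1 T2 U : graph) :
  tree T1 -> tree T2 -> simple U ->
  minimum_universal2 T1 T2 U -> minimal_universal2 T1 T2 U ->
  tree U.
Proof.
move=> t1 t2 sU minU minlU.
have [[i1 i2] _] := minU.
have [g1 ge1] := iso_emb_of sU i1.
have [g2 ge2] := iso_emb_of sU i2.
have [x01 _] : exists x : vert T1, x \in vert T1.
  by apply/card_gt0P; case: t1 => _ [].
have [x02 _] : exists x : vert T2, x \in vert T2.
  by apply/card_gt0P; case: t2 => _ [].
split; first exact: sU.
split; first by apply/card_gt0P; exists (g1 x01).
split.
  exact: (U_conn t1 t2 sU minU minlU ge1 ge2 x01).
exact: (U_acyc t1 t2 sU minU minlU ge1 ge2 x01 x02).
Qed.
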